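(* Let $\Gamma$ be a Taylor graph with intersection array $\{k,b,1;1,b,k\}$, eigenvalues $\theta_0>\theta_1>\theta_2>\theta_3$, and vertex set $X$. Let $x\in X$ and let $W$ be an irreducible $T(x)$-module with endpoint $1$ and local eigenvalue $\lambda\in\{\sigma,\tau\}$. Then: (i) $W$ has diameter $1$ and is thin. (ii) For any nonzero $w_0\in E^*_1(x)W$, setting $w_1=E^*_2(x)Aw_0$, the pair $\{w_0,w_1\}$ is a basis for $W$, and the matrix representing $A$ with respect to this basis is $\begin{pmatrix}\lambda & (\lambda-\theta_t)^2\\ 1 & \lambda\end{pmatrix}$, where $t=1$ if $\lambda=\sigma$ and $t=2$ if $\lambda=\tau$. (iii) $\sigma=(\theta_1+\theta_2)/2$ and $\tau=(\theta_2+\theta_3)/2$.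
   Context: A Taylor graph is a distance-regular graph with intersection array $\{k,b,1;1,b,k\}$ where $b<k-1$; it has diameter $3$. With $\mathcal{D}=(k-2b-1)^2+4k$, its eigenvalues are $\theta_0=k$, $\theta_1=\frac{k-2b-1+\sqrt{\mathcal{D}}}{2}$, $\theta_2=-1$, $\theta_3=\frac{k-2b-1-\sqrt{\mathcal{D}}}{2}$. Define $\sigma=\frac{k-2b-3+\sqrt{\mathcal{D}}}{4}$ and $\tau=\frac{k-2b-3-\sqrt{\mathcal{D}}}{4}$. Let $A$ be the adjacency matrix, $\partial$ the distance, $V=\mathbb{C}^X$, and for $0\le i\le 3$ let $E^*_i(x)$ be the diagonal matrix with $(E^*_i(x))_{yy}=1$ if $\partial(x,y)=i$ and $0$ otherwise. $T(x)$ is the subalgebra of $\mathrm{Mat}_X(\mathbb{C})$ generated by $A,E^*_0(x),\dots,E^*_3(x)$. For an irreducible $T(x)$-module $W$ (a nonzero $T(x)$-invariant subspace of $V$ with no invariant subspaces other than $0,W$), its endpoint is $\min\{i:E^*_i(x)W\neq0\}$, its diameter is $|\{i:E^*_i(x)W\ne 0\}|-1$, and $W$ is thin if $\dim E^*_i(x)W\le 1$ for all $i$. An irreducible module $W$ with endpoint $1$ has local eigenvalue $\lambda$ if $E^*_1(x)W$ is one-dimensional and consists of eigenvectors of $E^*_1(x)AE^*_1(x)$ with eigenvalue $\lambda$. *)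

(* Defs.v *)
From HB Require Import structures.
From mathcomp Require Import all_boot all_order all_algebra.
From mathcomp Require Import algC.
Set Implicit Arguments. Unset Strict Implicit. Unset Printing Implicit Defensive.
Import Order.TTheory GRing.Theory Num.Theory.
Local Open Scope ring_scope.

Section Graph.
Variable n : nat.
Variable adj : rel 'I_n.

Fixpoint walk_within (i : nat) (x y : 'I_n) : bool :=
  match i with
  | 0 => x == y
  | i'.+1 => (x == y) || [exists z, adj x z && walk_within i' z y]
  end.

Definition is_dist (x y : 'I_n) (i : nat) : bool :=
  walk_within i x y && ((i == 0)%N || ~~ walk_within i.-1 x y).

Definition nbr_count (x y : 'I_n) (j : nat) : nat :=
  #|[set z | adj y z && is_dist x z j]|.

(* distance-regular graph with intersection array {bs ; cs}
   = {b_0,...,b_{d-1} ; c_1,...,c_d}, diameter d = size bs *)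
Definition drg_with_array (bs cs : seq nat) : Prop :=
  let d := size bs in
  [/\ size cs = d, symmetric adj, irreflexive adj &
      (forall x y, exists2 i, (i <= d)%N & is_dist x y i)] /\
  [/\ (exists x y, is_dist x y d),
      (forall x y i, is_dist x y i -> (0 < i <= d)%N -> nbr_count x y i.-1 = nth 0%N cs i.-1)
    & (forall x y i, is_dist x y i -> (i < d)%N -> nbr_count x y i.+1 = nth 0%N bs i)].

Definition adjmx : 'M[algC]_n := \matrix_(i, j) (adj i j)%:R.

Definition Estar (x : 'I_n) (i : nat) : 'M[algC]_n :=
  diag_mx (\row_y (is_dist x y i)%:R).

Inductive inT (x : 'I_n) : 'M[algC]_n -> Prop :=
| inT_A : inT x adjmx
| inT_E i : (i <= 3)%N -> inT x (Estar x i)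
| inT_1 : inT x 1%:M
| inT_add M N : inT x M -> inT x N -> inT x (M + N)
| inT_scale (c : algC) M : inT x M -> inT x (c *: M)
| inT_mul M N : inT x M -> inT x N -> inT x (M *m N).

(* subspaces of V = C^X are represented by row spaces of square matrices;
   vectors are row vectors and a matrix M acts by v |-> v *m M
   (all generators of T(x) are symmetric). *)
Definition Tinvariant (x : 'I_n) (U : 'M[algC]_n) : Prop :=
  forall M, inT x M -> (U *m M <= U)%MS.

Definition irreducible_Tmodule (x : 'I_n) (W : 'M[algC]_n) : Prop :=
  [/\ W != 0, Tinvariant x W &
      forall U : 'M[algC]_n, (U <= W)%MS -> Tinvariant x U ->
        U == 0 \/ (U == W)%MS].

(* E*_i(x) W is the row space of W *m E*_i(x) *)
Definition has_endpoint (x : 'I_n) (W : 'M[algC]_n) (e : nat) : Prop :=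
  (\rank (W *m Estar x e) != 0)%N /\
  forall i, (i < e)%N -> \rank (W *m Estar x i) = 0%N.

Definition diameter_is (x : 'I_n) (W : 'M[algC]_n) (d : nat) : Prop :=
  #|[set i : 'I_4 | \rank (W *m Estar x i) != 0%N]|.-1 = d.

Definition thin (x : 'I_n) (W : 'M[algC]_n) : Prop :=
  forall i, (\rank (W *m Estar x i) <= 1)%N.

Definition local_eigenvalue (x : 'I_n) (W : 'M[algC]_n) (lam : algC) : Prop :=
  \rank (W *m Estar x 1) = 1%N /\
  forall v : 'rV[algC]_n, (v <= W *m Estar x 1)%MS ->
    v *m (Estar x 1 *m adjmx *m Estar x 1) = lam *: v.

End Graph.

Definition is_taylor_graph (n : nat) (adj : rel 'I_n) (k b : nat) : Prop :=
  (b.+1 < k)%N /\ drg_with_array adj [:: k; b; 1%N] [:: 1%N; b; k].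

Definition taylorD (k b : nat) : algC :=
  (k%:R - 2 * b%:R - 1) ^+ 2 + 4 * k%:R.
Definition theta0 (k b : nat) : algC := k%:R.
Definition theta1 (k b : nat) : algC := (k%:R - 2 * b%:R - 1 + sqrtC (taylorD k b)) / 2.
Definition theta2 (k b : nat) : algC := -1.
Definition theta3 (k b : nat) : algC := (k%:R - 2 * b%:R - 1 - sqrtC (taylorD k b)) / 2.
Definition tsigma (k b : nat) : algC := (k%:R - 2 * b%:R - 3 + sqrtC (taylorD k b)) / 4.
Definition ttau (k b : nat) : algC := (k%:R - 2 * b%:R - 3 - sqrtC (taylorD k b)) / 4.

(* Main.v *)
Require Import Defs.
From HB Require Import structures.
From mathcomp Require Import all_boot all_order all_algebra.
From mathcomp Require Import algC ring.
Set Implicit Arguments. Unset Strict Implicit. Unset Printing Implicit Defensive.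
Import Order.TTheory GRing.Theory Num.Theory.

Lemma ww_mono n (adj : rel 'I_n) i x y : walk_within adj i x y -> walk_within adj i.+1 x y.
Proof.
elim: i x y => [|i IH] x y /=.
  by move=> ->.
case/orP=> [->//|/existsP [z /andP[xz wz]]].
by apply/orP; right; apply/existsP; exists z; rewrite xz; exact: IH.
Qed.

Lemma ww_le n (adj : rel 'I_n) i j x y : (i <= j)%N -> walk_within adj i x y -> walk_within adj j x y.
Proof.
move=> /subnK <-; elim: (j - i)%N => [//|d IH] h.
by rewrite addSn; apply: ww_mono; apply: IH.
Qed.

Lemma ww_cat n (adj : rel 'I_n) i j x y z : walk_within adj i x y -> walk_within adj j y z ->
  walk_within adj (i + j) x z.
Proof.
elim: i x => [|i IH] x.
  by move=> /eqP ->.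
move=> /= /orP [/eqP ->|/existsP [u /andP[xu wu]]] wyz.
  have := ww_le (leq_addl i.+1 j) wyz. exact.
by apply/orP; right; apply/existsP; exists u; rewrite xu; exact: IH.
Qed.

Lemma ww1 n (adj : rel 'I_n) x y : walk_within adj 1 x y = (x == y) || adj x y.
Proof.
rewrite /=; congr (_ || _); apply/existsP/idP => [[z /andP[xz /eqP <-]]//|xy].
by exists y; rewrite xy eqxx.
Qed.

Lemma ww_sym n (adj : rel 'I_n) (sa : symmetric adj) i x y :
  walk_within adj i x y -> walk_within adj i y x.
Proof.
elim: i x y => [|i IH] x y /=.
  by rewrite eq_sym.
case/orP=> [/eqP ->|/existsP [u /andP[xu wu]]]; first by rewrite eqxx.
have := ww_cat (IH _ _ wu) (_ : walk_within adj 1 u x).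
by rewrite addn1; apply; rewrite ww1 sa xu orbT.
Qed.

Lemma ww_adj n (adj : rel 'I_n) i x y z : walk_within adj i x y -> adj y z ->
  walk_within adj i.+1 x z.
Proof.
move=> w yz; rewrite -addn1; apply: (ww_cat w); by rewrite ww1 yz orbT.
Qed.

Lemma dist_le n (adj : rel 'I_n) m x y j : walk_within adj m x y -> is_dist adj x y j -> (j <= m)%N.
Proof.
move=> w /andP[_]; case: j => [//|j] /= nw.
rewrite ltnNge; apply: contra nw => h; exact: ww_le h w.
Qed.

Lemma dist_uniq n (adj : rel 'I_n) x y i j : is_dist adj x y i -> is_dist adj x y j -> i = j.
Proof.
move=> hi hj; apply/eqP; rewrite eqn_leq.
by rewrite (dist_le (proj1 (andP hi)) hj) (dist_le (proj1 (andP hj)) hi).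
Qed.

Lemma dist_sym n (adj : rel 'I_n) (sa : symmetric adj) x y i :
  is_dist adj x y i -> is_dist adj y x i.
Proof.
case/andP=> w h; apply/andP; split; first exact: ww_sym.
case/orP: h => [->//|h]; apply/orP; right; apply: contra h; exact: ww_sym.
Qed.

Lemma dist0 n (adj : rel 'I_n) x y : is_dist adj x y 0 = (x == y).
Proof. by rewrite /is_dist /= andbT. Qed.

Lemma dist1 n (adj : rel 'I_n) (ir : irreflexive adj) x y : is_dist adj x y 1 = adj x y.
Proof.
rewrite /is_dist ww1 /=; case: eqP => [->|_]; first by rewrite ir.
by rewrite andbT.
Qed.
Lemma sum_bool (T : finType) (P : pred T) : (\sum_z (P z : nat))%N = #|P|.
Proof. by rewrite -sum1_card [RHS]big_mkcond; apply: eq_bigr => z _; rewrite unfold_in; case: (P z). Qed.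


Lemma tg_sym n (adj : rel 'I_n) k b : is_taylor_graph adj k b -> symmetric adj.
Proof. by case=> _ [[]]. Qed.
Lemma tg_irr n (adj : rel 'I_n) k b : is_taylor_graph adj k b -> irreflexive adj.
Proof. by case=> _ [[]]. Qed.
Lemma tg_dist n (adj : rel 'I_n) k b : is_taylor_graph adj k b -> forall x y, exists2 i, (i <= 3)%N & is_dist adj x y i.
Proof. by case=> _ [[]]. Qed.
Lemma tg_kb n (adj : rel 'I_n) k b : is_taylor_graph adj k b -> (b.+1 < k)%N.
Proof. by case. Qed.
Lemma tg_c n (adj : rel 'I_n) k b : is_taylor_graph adj k b -> forall x y i, is_dist adj x y i -> (0 < i <= 3)%N -> nbr_count adj x y i.-1 = nth 0%N [:: 1%N; b; k] i.-1.
Proof. by case=> _ [_ []]. Qed.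
Lemma tg_b n (adj : rel 'I_n) k b : is_taylor_graph adj k b -> forall x y i, is_dist adj x y i -> (i < 3)%N -> nbr_count adj x y i.+1 = nth 0%N [:: k; b; 1%N] i.
Proof. by case=> _ [_ []]. Qed.
Lemma tg_ex n (adj : rel 'I_n) k b : is_taylor_graph adj k b -> exists x y, is_dist adj x y 3.
Proof. by case=> _ [_ []]. Qed.

Lemma nbr_sum n (adj : rel 'I_n) x y j : nbr_count adj x y j = (\sum_z (adj y z && is_dist adj x z j : nat))%N.
Proof. by rewrite /nbr_count sum_bool cardsE. Qed.

Lemma dcount n (adj : rel 'I_n) (sa : symmetric adj) a i j :
  (\sum_z (is_dist adj a z j) * nbr_count adj a z i = \sum_u (is_dist adj a u i) * nbr_count adj a u j)%N.
Proof.
under eq_bigr do rewrite nbr_sum big_distrr /=.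
under [RHS]eq_bigr do rewrite nbr_sum big_distrr /=.
rewrite exchange_big /=; apply: eq_bigr => u _; apply: eq_bigr => z _.
by rewrite sa; case: (is_dist adj a z j); case: (is_dist adj a u i); case: (adj u z).
Qed.

Lemma dcount_const n (adj : rel 'I_n) a i j c :
  (forall z, is_dist adj a z j -> nbr_count adj a z i = c) ->
  (\sum_z (is_dist adj a z j) * nbr_count adj a z i = #|[set z | is_dist adj a z j]| * c)%N.
Proof.
move=> h; rewrite cardsE -sum_bool big_distrl /=; apply: eq_bigr => z _.
rewrite -/(is_dist adj a z j); case E: (is_dist adj a z j); [by rewrite (h z E) | by []].
Qed.

Lemma dist_refl n (adj : rel 'I_n) a : is_dist adj a a 0.
Proof. by rewrite dist0. Qed.

Definition anti n (adj : rel 'I_n) (a : 'I_n) : 'I_n := odflt a [pick w | is_dist adj a w 3].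

Lemma tg_G1 n (adj : rel 'I_n) k b (HG : is_taylor_graph adj k b) a :
  #|[set z | is_dist adj a z 1]| = k.
Proof.
have := tg_b HG (dist_refl adj a) (isT : (0 < 3)%N); rewrite /nbr_count /= => <-.
by apply: eq_card => z; rewrite !inE dist1 ?andbb //; exact: tg_irr HG.
Qed.

Lemma tg_bpos n (adj : rel 'I_n) k b (HG : is_taylor_graph adj k b) : (0 < b)%N.
Proof.
have [x0 [y0 d3]] := tg_ex HG.
have kpos : (0 < k)%N by have := tg_kb HG; case: (k).
have := tg_c HG d3 isT; rewrite /= /nbr_count => ck.
have /card_gt0P [z] : (0 < #|[set z | adj y0 z && is_dist adj x0 z 2]|)%N by rewrite ck.
rewrite inE => /andP [_ d2].
have := tg_c HG d2 isT; rewrite /= /nbr_count => <-.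
apply/card_gt0P.
move: d2 => /andP [w2 nw1]; rewrite /= in nw1.
move: w2 => /= /orP [/eqP xz|/existsP [u /andP [xu wu]]].
  by rewrite xz eqxx in nw1.
exists u; rewrite inE dist1; last exact: tg_irr HG.
rewrite (tg_sym HG) xu andbT.
move: wu => /orP [/eqP uz|/existsP [w /andP [uw /eqP <-]]//].
move: nw1; rewrite -uz => /norP [_ /existsP []]; exists u; by rewrite xu eqxx.
Qed.

Lemma tg_G2 n (adj : rel 'I_n) k b (HG : is_taylor_graph adj k b) a :
  #|[set z | is_dist adj a z 2]| = k.
Proof.
have := dcount (tg_sym HG) a 1 2.
rewrite (@dcount_const _ _ a 1 2 b); last by move=> z dz; exact: (tg_c HG dz isT).
rewrite (@dcount_const _ _ a 2 1 b); last by move=> z dz; exact: (tg_b HG dz isT).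
by rewrite (tg_G1 HG) => /eqP; rewrite eqn_pmul2r ?(tg_bpos HG) // => /eqP.
Qed.

Lemma tg_G3 n (adj : rel 'I_n) k b (HG : is_taylor_graph adj k b) a :
  #|[set z | is_dist adj a z 3]| = 1%N.
Proof.
have kpos : (0 < k)%N by have := tg_kb HG; case: (k).
have := dcount (tg_sym HG) a 2 3.
rewrite (@dcount_const _ _ a 2 3 k); last by move=> z dz; exact: (tg_c HG dz isT).
rewrite (@dcount_const _ _ a 3 2 1); last by move=> z dz; exact: (tg_b HG dz isT).
by rewrite (tg_G2 HG) muln1 -{2}(mul1n k) => /eqP; rewrite eqn_pmul2r // => /eqP.
Qed.

Lemma anti_dist n (adj : rel 'I_n) k b (HG : is_taylor_graph adj k b) a w :
  is_dist adj a w 3 = (w == anti adj a).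
Proof.
have /cards1P [c hc] := introT eqP (tg_G3 HG a).
have hw : forall v, is_dist adj a v 3 = (v == c).
  by move=> v; have := congr1 (fun S : {set 'I_n} => v \in S) hc; rewrite /= !inE.
rewrite /anti; case: pickP => [d hd|none]; first by rewrite hw; move: hd; rewrite hw => /eqP ->.
by have := none c; rewrite hw eqxx.
Qed.

Lemma anti3 n (adj : rel 'I_n) k b (HG : is_taylor_graph adj k b) a :
  is_dist adj a (anti adj a) 3.
Proof. by rewrite (anti_dist HG). Qed.

Lemma antiK n (adj : rel 'I_n) k b (HG : is_taylor_graph adj k b) a :
  anti adj (anti adj a) = a.
Proof.
have := dist_sym (tg_sym HG) (anti3 HG a); rewrite (anti_dist HG) => /eqP <-//.
Qed.

Lemma adj_anti n (adj : rel 'I_n) k b (HG : is_taylor_graph adj k b) a c :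
  is_dist adj a c 2 -> adj c (anti adj a).
Proof.
move=> d2; have := tg_b HG d2 isT; rewrite /= /nbr_count => h.
have /card_gt0P [w] : (0 < #|[set z | adj c z && is_dist adj a z 3]|)%N by rewrite h.
by rewrite inE (anti_dist HG) => /andP [cw /eqP <-].
Qed.

Lemma dist_cases n (adj : rel 'I_n) k b (HG : is_taylor_graph adj k b) x y :
  [\/ is_dist adj x y 0, is_dist adj x y 1, is_dist adj x y 2 | is_dist adj x y 3].
Proof.
have [j j3 dj] := tg_dist HG x y.
by case: j j3 dj => [|[|[|[|j]]]] //= _ dj; [constructor 1|constructor 2|constructor 3|constructor 4].
Qed.

Lemma anti_adj n (adj : rel 'I_n) k b (HG : is_taylor_graph adj k b) u v :
  adj u v -> adj (anti adj u) (anti adj v).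
Proof.
move=> uv; have sa := tg_sym HG; have ir := tg_irr HG.
have key : forall j, is_dist adj u (anti adj v) j -> (3 <= j.+1)%N.
  move=> j dj; have w : walk_within adj (1 + j) v (anti adj v).
    by apply: ww_cat (proj1 (andP dj)); rewrite ww1 sa uv orbT.
  exact: dist_le w (anti3 HG v).
case: (dist_cases HG u (anti adj v)) => dj; have := key _ dj => //= _.
  by rewrite sa; apply: (adj_anti HG).
move: dj; rewrite (anti_dist HG) => /eqP e.
have uv2 : u = v by apply: (can_inj (antiK HG)); rewrite e.
by rewrite uv2 ir in uv.
Qed.

Lemma adj_antiE n (adj : rel 'I_n) k b (HG : is_taylor_graph adj k b) u j :
  adj (anti adj u) j = adj u (anti adj j).
Proof.
apply/idP/idP => h.
  by have := anti_adj HG h; rewrite (antiK HG).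
by have := anti_adj HG h; rewrite (antiK HG).
Qed.

Lemma walk2 n (adj : rel 'I_n) (sa : symmetric adj) a c m :
  adj a c -> adj c m -> walk_within adj 2 a m.
Proof. by move=> ac cm; apply: (ww_adj _ cm); rewrite ww1 ac orbT. Qed.

Lemma anti_d1 n (adj : rel 'I_n) k b (HG : is_taylor_graph adj k b) x y :
  is_dist adj x y 1 -> is_dist adj x (anti adj y) 2.
Proof.
have sa := tg_sym HG; have ir := tg_irr HG.
move=> d1; case: (dist_cases HG x (anti adj y)) => // dj.
- move: dj; rewrite dist0 => /eqP e.
  have : is_dist adj x y 3 by rewrite (anti_dist HG) e (antiK HG).
  by move/(dist_uniq d1).
- move: d1 dj; rewrite !(dist1 ir) => d1 dj.
  have := dist_le (walk2 sa (_ : adj y x) dj) (anti3 HG y).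
  by rewrite sa d1 => /(_ isT).
- move: dj; rewrite (anti_dist HG) => /eqP e.
  have yx : y = x by apply: (can_inj (antiK HG)).
  by move: d1; rewrite yx dist1 // ir.
Qed.

Lemma anti_d2 n (adj : rel 'I_n) k b (HG : is_taylor_graph adj k b) x z :
  is_dist adj x z 2 -> is_dist adj x (anti adj z) 1.
Proof.
have sa := tg_sym HG; have ir := tg_irr HG.
move=> d2; case: (dist_cases HG x (anti adj z)) => // dj.
- move: dj; rewrite dist0 => /eqP e.
  have : is_dist adj x z 3 by rewrite (anti_dist HG) e (antiK HG).
  by move/(dist_uniq d2).
- have h1 := adj_anti HG dj; have h2 := adj_anti HG d2.
  have := dist_le (walk2 sa h2 (_ : adj (anti adj x) (anti adj z))) (anti3 HG z).
  by rewrite sa h1 => /(_ isT).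
- move: dj; rewrite (anti_dist HG) => /eqP e.
  have zx : z = x by apply: (can_inj (antiK HG)).
  by move: d2; rewrite zx => /(dist_uniq (dist_refl adj x)).
Qed.

Lemma key_adj n (adj : rel 'I_n) k b (HG : is_taylor_graph adj k b) x y z :
  is_dist adj x y 1 -> is_dist adj x z 2 ->
  adj y z = (y != anti adj z) && ~~ adj y (anti adj z).
Proof.
have sa := tg_sym HG; have ir := tg_irr HG.
move=> d1 d2; have du := anti_d2 HG d2; set u := anti adj z in du *.
have zu : z = anti adj u by rewrite /u (antiK HG).
have nuz : ~~ adj u z.
  apply/negP => uz; have := dist_uniq (anti3 HG u) (_ : is_dist adj u (anti adj u) 1).
  by rewrite dist1 // -zu => /(_ uz).
case: (eqVneq y u) => [->|yu] /=; first by apply/negbTE.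
case yuA: (adj y u) => /=.
  apply/negP => yz; have := dist_le (walk2 sa (_ : adj u y) yz).
  by rewrite sa yuA => /(_ 3 isT); rewrite zu => /(_ (anti3 HG u)).
have dyu : is_dist adj y u 2.
  move: d1 du; rewrite !(dist1 ir) => d1 du.
  have w := walk2 sa (_ : adj y x) du; rewrite sa d1 in w.
  case: (dist_cases HG y u) => dj.
  - by move: dj; rewrite dist0 (negbTE yu).
  - by move: dj; rewrite dist1 // yuA.
  - done.
  - by have := dist_le (w isT) dj.
rewrite zu; apply: (adj_anti HG); exact: dist_sym dyu.
Qed.

Local Open Scope ring_scope.

Lemma mulA_entry n (adj : rel 'I_n) (v : 'rV[algC]_n) j :
  (v *m adjmx adj) 0 j = \sum_i v 0 i * (adj i j)%:R.
Proof. by rewrite mxE; apply: eq_bigr => i _; rewrite mxE. Qed.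

Lemma mulE_entry n (adj : rel 'I_n) x (v : 'rV[algC]_n) i j :
  (v *m Estar adj x i) 0 j = v 0 j * (is_dist adj x j i)%:R.
Proof. by rewrite /Estar mul_mx_diag !mxE. Qed.

Lemma distE n (adj : rel 'I_n) x j i i0 : is_dist adj x j i0 -> is_dist adj x j i = (i == i0).
Proof.
move=> h; apply/idP/eqP => [h2|->//]; exact: dist_uniq h2 h.
Qed.

Lemma addsc_entry n (a c : algC) (u v : 'rV[algC]_n) j : (a *: u + c *: v) 0 j = a * u 0 j + c * v 0 j.
Proof. by rewrite !mxE. Qed.

Lemma add_entry n (a : algC) (u v : 'rV[algC]_n) j : (a *: u + v) 0 j = a * u 0 j + v 0 j.
Proof. by rewrite !mxE. Qed.

Lemma vecH n (adj : rel 'I_n) k b (HG : is_taylor_graph adj k b) x (lam : algC) (w0 : 'rV[algC]_n)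
  (supp : forall y, w0 0 y != 0 -> is_dist adj x y 1)
  (loc : forall u, is_dist adj x u 1 -> (w0 *m adjmx adj) 0 u = lam * w0 0 u)
  (sum0 : \sum_y w0 0 y = 0) :
  w0 *m adjmx adj = lam *: w0 + w0 *m adjmx adj *m Estar adj x 2.
Proof.
have sa := tg_sym HG; have ir := tg_irr HG.
have w0z : forall y, ~~ is_dist adj x y 1 -> w0 0 y = 0.
  by move=> y; apply: contraNeq; exact: supp.
apply/rowP => j; rewrite add_entry mulE_entry.
case: (dist_cases HG x j) => dj; rewrite (distE 2 dj) /= ?mulr0 ?mulr1 ?addr0.
- rewrite w0z ?(distE 1 dj) // mulr0 mulA_entry.
  move: dj; rewrite dist0 => /eqP <-; rewrite -[RHS]sum0; apply: eq_bigr => y _.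
  have [->|/supp] := eqVneq (w0 0 y) 0; first by rewrite mul0r.
  by rewrite (dist1 ir) sa => ->; rewrite mulr1.
- by rewrite loc.
- by rewrite w0z ?(distE 1 dj) // mulr0 add0r.
- rewrite w0z ?(distE 1 dj) // mulr0 mulA_entry big1 // => y _.
  have [->|/supp dy] := eqVneq (w0 0 y) 0; first by rewrite mul0r.
  case yj: (adj y j); last by rewrite mulr0.
  by have := dist_le (ww_adj (proj1 (andP dy)) yj) dj.
Qed.

Lemma sum_pick1 n (f : 'I_n -> algC) u : \sum_y f y * (y == u)%:R = f u.
Proof.
rewrite (bigD1 u) //= eqxx mulr1 big1 ?addr0 // => y /negbTE ->; by rewrite mulr0.
Qed.

Lemma vecF n (adj : rel 'I_n) k b (HG : is_taylor_graph adj k b) x (lam : algC) (w0 : 'rV[algC]_n)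
  (supp : forall y, w0 0 y != 0 -> is_dist adj x y 1)
  (loc : forall u, is_dist adj x u 1 -> (w0 *m adjmx adj) 0 u = lam * w0 0 u)
  (sum0 : \sum_y w0 0 y = 0) j :
  (w0 *m adjmx adj *m Estar adj x 2) 0 j = - (1 + lam) * w0 0 (anti adj j).
Proof.
have sa := tg_sym HG; have ir := tg_irr HG.
have w0z : forall y, ~~ is_dist adj x y 1 -> w0 0 y = 0.
  by move=> y; apply: contraNeq; exact: supp.
rewrite mulE_entry.
case d2: (is_dist adj x j 2); last first.
  rewrite mulr0 w0z ?mulr0 //; apply/negP => /(anti_d1 HG); by rewrite (antiK HG) d2.
rewrite mulr1 mulA_entry.
have du := anti_d2 HG d2; set u := anti adj j in du *.
transitivity (\sum_y (w0 0 y - w0 0 y * (y == u)%:R - w0 0 y * (adj y u)%:R)).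
  apply: eq_bigr => y _.
  have [->|/supp dy] := eqVneq (w0 0 y) 0; first by rewrite !mul0r !subr0.
  rewrite (key_adj HG dy d2) -/u.
  have [->|yu] := eqVneq y u; first by rewrite ir /= mulr0 mulr1 subrr subr0.
  by case: (adj y u); rewrite /= ?mulr0 ?mulr1 ?subr0 ?subrr.
rewrite !sumrB sum0 sum_pick1 -mulA_entry loc //; ring.
Qed.

Lemma vecG n (adj : rel 'I_n) k b (HG : is_taylor_graph adj k b) x (lam : algC) (w0 : 'rV[algC]_n)
  (supp : forall y, w0 0 y != 0 -> is_dist adj x y 1)
  (loc : forall u, is_dist adj x u 1 -> (w0 *m adjmx adj) 0 u = lam * w0 0 u)
  (sum0 : \sum_y w0 0 y = 0) :
  let w1 := w0 *m adjmx adj *m Estar adj x 2 in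
  w1 *m adjmx adj = (lam + 1) ^+ 2 *: w0 + lam *: w1.
Proof.
move=> w1.
have F := vecF HG supp loc sum0.
have H := vecH HG supp loc sum0.
apply/rowP => j; rewrite addsc_entry mulA_entry.
rewrite (reindex_inj (can_inj (antiK HG))) /=.
transitivity (- (1 + lam) * (w0 *m adjmx adj) 0 (anti adj j)).
  rewrite mulA_entry mulr_sumr; apply: eq_bigr => z _.
  by rewrite F (antiK HG) (adj_antiE HG) mulrA.
rewrite H add_entry /w1 !F (antiK HG); ring.
Qed.
Lemma Tinv_of n (adj : rel 'I_n) x m (U : 'M[algC]_(m, n)) :
  (U *m adjmx adj <= U)%MS -> (forall i, (i <= 3)%N -> (U *m Estar adj x i <= U)%MS) ->
  forall M, inT adj x M -> (U *m M <= U)%MS.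
Proof.
move=> hA hE M; elim => {M}.
- exact: hA.
- exact: hE.
- by rewrite mulmx1 submx_refl.
- by move=> M N _ hM _ hN; rewrite mulmxDr addmx_sub.
- by move=> c M _ hM; rewrite -scalemxAr scalemx_sub.
- move=> M N _ hM _ hN; rewrite mulmxA; apply: submx_trans hN.
  exact: submxMr.
Qed.

Lemma Tinv_gen n (adj : rel 'I_n) x m (U : 'M[algC]_(m, n)) :
  (U *m adjmx adj <= U)%MS -> (forall i, (i <= 3)%N -> (U *m Estar adj x i <= U)%MS) ->
  Tinvariant adj x <<U>>%MS.
Proof.
move=> hA hE M hM; rewrite genmxE.
apply: submx_trans (Tinv_of hA hE hM); apply: submxMr; rewrite genmxE submx_refl //.
Qed.

Lemma Estar_idem n (adj : rel 'I_n) x i : Estar adj x i *m Estar adj x i = Estar adj x i.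
Proof.
rewrite /Estar mulmx_diag; congr diag_mx; apply/rowP => j; rewrite !mxE.
by case: (is_dist adj x j i); rewrite ?mulr1 ?mulr0.
Qed.

Lemma vec_supp n (adj : rel 'I_n) x (v : 'rV[algC]_n) i0 :
  (forall y, v 0 y != 0 -> is_dist adj x y i0) ->
  forall i, v *m Estar adj x i = if i == i0 then v else 0.
Proof.
move=> hs i; apply/rowP => j; rewrite mulE_entry.
have [v0|/hs dj] := eqVneq (v 0 j) 0; first by rewrite v0 mul0r; case: ifP => _; rewrite ?v0 ?mxE.
by rewrite (distE i dj); case: ifP; rewrite ?mxE ?mulr1 ?mulr0.
Qed.

Lemma cap_disj n (u v : 'rV[algC]_n) (P : 'M[algC]_n) :
  u *m P = u -> v *m P = 0 -> (u :&: v)%MS = 0.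
Proof.
move=> hu hv; apply/eqP; rewrite -submx0; apply/row_subP => i.
set r := row i _.
have ru : (r <= u)%MS by apply: submx_trans (row_sub i _) (capmxSl _ _).
have rv : (r <= v)%MS by apply: submx_trans (row_sub i _) (capmxSr _ _).
case/sub_rVP: ru => a ea; case/sub_rVP: rv => c ec.
have : r *m P = r by rewrite ea -scalemxAl hu.
by rewrite {1}ec -scalemxAl hv scaler0 => <-; rewrite sub0mx.
Qed.

Lemma rank_col2 n (u v : 'rV[algC]_n) (P : 'M[algC]_n) :
  u *m P = u -> v *m P = 0 -> u != 0 -> v != 0 -> \rank (col_mx u v) = 2%N.
Proof.
move=> hu hv nu nv; rewrite -addsmxE mxrank_disjoint_sum ?(cap_disj hu hv) //.
by rewrite !rank_rV nu nv.
Qed.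

Lemma w0_facts n (adj : rel 'I_n) k b (HG : is_taylor_graph adj k b) x (W : 'M[algC]_n) (lam : algC)
  (HW : irreducible_Tmodule adj x W) (Hend : has_endpoint adj x W 1)
  (Hloc : local_eigenvalue adj x W lam) (w0 : 'rV[algC]_n) :
  (w0 <= W *m Estar adj x 1)%MS ->
  [/\ (w0 <= W)%MS, (forall y, w0 0 y != 0 -> is_dist adj x y 1),
      (forall u, is_dist adj x u 1 -> (w0 *m adjmx adj) 0 u = lam * w0 0 u)
    & \sum_y w0 0 y = 0].
Proof.
move=> hw; have sa := tg_sym HG; have ir := tg_irr HG.
case: HW => _ tinv _.
have hW : (w0 <= W)%MS by apply: submx_trans hw (tinv _ (@inT_E _ adj x 1 isT)).
have e1 : w0 *m Estar adj x 1 = w0.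
  by case/submxP: hw => D ->; rewrite -mulmxA -(mulmxA W) Estar_idem.
have supp : forall y, w0 0 y != 0 -> is_dist adj x y 1.
  move=> y; rewrite -e1 mulE_entry; by case: (is_dist adj x y 1); rewrite ?mulr0 ?eqxx.
split => //.
  move=> u du; have := congr1 (fun v : 'rV_n => v 0 u) (proj2 Hloc w0 hw).
  by rewrite /= !mulmxA e1 mulE_entry du mulr1 [(lam *: w0) 0 u]mxE.
have WE0 : W *m Estar adj x 0 = 0 by apply/eqP; rewrite -mxrank_eq0 (proj2 Hend 0%N isT).
have hA : (w0 *m adjmx adj <= W)%MS.
  by apply: submx_trans (submxMr _ hW) (tinv _ (inT_A adj x)).
have := submxMr (Estar adj x 0) hA; rewrite WE0 submx0 => /eqP h0.
have := congr1 (fun v : 'rV_n => v 0 x) h0; rewrite /= mulE_entry dist_refl mulr1 [(0 : 'rV[algC]_n) 0 x]mxE mulA_entry.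
move=> h; rewrite -[RHS]h; apply: eq_bigr => y _.
have [->|/supp] := eqVneq (w0 0 y) 0; first by rewrite mul0r.
by rewrite (dist1 ir) sa => ->; rewrite mulr1.
Qed.
Lemma lam_not_m1 (k b : nat) (lam : algC) :
  (lam = tsigma k b \/ lam = ttau k b) -> (0 < b)%N -> lam + 1 != 0.
Proof.
move=> Hl bpos; apply/negP => /eqP e.
set s := sqrtC (taylorD k b).
have hs : s ^+ 2 = taylorD k b by rewrite sqrtCK.
have hX : s ^+ 2 = (k%:R - 2 * b%:R + 1) ^+ 2.
  case: Hl => El.
    have -> : s = - (k%:R - 2 * b%:R + 1).
      apply/eqP; rewrite -subr_eq0.
      have -> : s - - (k%:R - 2 * b%:R + 1) = 4 * (lam + 1) by rewrite El /tsigma -/s; field.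
      by rewrite e mulr0.
    by rewrite sqrrN.
  have -> : s = (k%:R - 2 * b%:R + 1).
    apply/eqP; rewrite -subr_eq0.
    have -> : s - (k%:R - 2 * b%:R + 1) = - 4 * (lam + 1) by rewrite El /ttau -/s; field.
    by rewrite e mulr0.
  done.
have h8 : 8 * (b%:R : algC) = 0.
  have -> : 8 * (b%:R : algC) = taylorD k b - (k%:R - 2 * b%:R + 1) ^+ 2 by rewrite /taylorD; ring.
  by rewrite -hs hX subrr.
move/eqP: h8; rewrite mulf_eq0 => /orP [|]; first by rewrite (pnatr_eq0 _ 8).
by rewrite pnatr_eq0 => /eqP b0; rewrite b0 in bpos.
Qed.

Lemma part3 k b : tsigma k b = (theta1 k b + theta2 k b) / 2 /\
   ttau k b = (theta2 k b + theta3 k b) / 2.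
Proof. by split; rewrite /tsigma /ttau /theta1 /theta2 /theta3; field. Qed.

Lemma sig_th1 k b : (tsigma k b - theta1 k b) ^+ 2 = (tsigma k b + 1) ^+ 2.
Proof. by rewrite /tsigma /theta1; field. Qed.

Lemma tau_th2 k b : (ttau k b - theta2 k b) ^+ 2 = (ttau k b + 1) ^+ 2.
Proof. by rewrite /theta2 opprK. Qed.
Lemma module_part n (adj : rel 'I_n) k b (HG : is_taylor_graph adj k b) x (W : 'M[algC]_n) (lam : algC)
  (HW : irreducible_Tmodule adj x W) (Hend : has_endpoint adj x W 1)
  (Hloc : local_eigenvalue adj x W lam) (hl1 : lam + 1 != 0) (w0 : 'rV[algC]_n) :
  w0 != 0 -> (w0 <= W *m Estar adj x 1)%MS ->
  let w1 := w0 *m adjmx adj *m Estar adj x 2 in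
  [/\ (col_mx w0 w1 == W)%MS, \rank (col_mx w0 w1) = 2%N,
      w0 *m adjmx adj = lam *: w0 + w1,
      w1 *m adjmx adj = (lam + 1) ^+ 2 *: w0 + lam *: w1 &
      [/\ w1 != 0, forall i, w0 *m Estar adj x i = if i == 1%N then w0 else 0
        & forall i, w1 *m Estar adj x i = if i == 2%N then w1 else 0]].
Proof.
move=> nz hw w1.
have [hW supp loc sum0] := w0_facts HG HW Hend Hloc hw.
have H := vecH HG supp loc sum0.
have G := vecG HG supp loc sum0.
have F := vecF HG supp loc sum0.
have supp1 : forall y, w1 0 y != 0 -> is_dist adj x y 2.
  move=> y; rewrite /w1 mulE_entry; by case: (is_dist adj x y 2); rewrite ?mulr0 ?eqxx.
have e0 := vec_supp supp; have e1 := vec_supp supp1.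
have nz1 : w1 != 0.
  have [y hy] : exists y, w0 0 y != 0.
    apply/existsP; apply: contraR nz => /existsPn h; apply/eqP/rowP => j.
    by rewrite mxE; apply/eqP/negPn/h.
  apply/eqP => /rowP /(_ (anti adj y)); rewrite /w1 F (antiK HG) mxE.
  by move/eqP; rewrite mulf_eq0 oppr_eq0 addrC (negbTE hl1) (negbTE hy).
case: HW => _ tinv irr.
set U := col_mx w0 w1.
have w0U : (w0 <= U)%MS by rewrite /U -addsmxE addsmxSl.
have w1U : (w1 <= U)%MS by rewrite /U -addsmxE addsmxSr.
have UA : (U *m adjmx adj <= U)%MS.
  by rewrite /U mul_col_mx col_mx_sub -/w1 H G !addmx_sub ?scalemx_sub.
have UE : forall i, (i <= 3)%N -> (U *m Estar adj x i <= U)%MS.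
  move=> i _; rewrite /U mul_col_mx col_mx_sub e0 e1.
  by case: ifP; case: ifP; rewrite ?w0U ?w1U ?sub0mx.
have TU := Tinv_gen UA UE.
have w1W : (w1 <= W)%MS.
  apply: submx_trans (tinv _ (@inT_E _ adj x 2 isT)); apply: submxMr.
  by apply: submx_trans (submxMr _ hW) (tinv _ (inT_A adj x)).
have UW : (<<U>> <= W)%MS by rewrite genmxE /U col_mx_sub hW w1W.
have eUW : (U == W)%MS.
  case: (irr _ UW TU) => [/eqP U0|]; last by rewrite !genmxE.
  have : (w0 <= <<U>>)%MS by rewrite genmxE.
  by rewrite U0 submx0 (negbTE nz).
split => //.
by apply: (rank_col2 (P := Estar adj x 1)); rewrite ?e0 ?e1.
Qed.

Lemma rank_two n (u v : 'rV[algC]_n) (i : nat) : u != 0 -> v != 0 ->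
  \rank (col_mx (if i == 1%N then u else 0) (if i == 2%N then v else 0)) = ((i == 1%N) + (i == 2%N))%N.
Proof.
move=> nu nv.
case: i => [|[|[|i]]] /=.
- by rewrite col_mx0 mxrank0.
- by rewrite -addsmxE addsmx0 rank_rV nu.
- by rewrite -addsmxE adds0mx rank_rV nv.
- by rewrite col_mx0 mxrank0.
Qed.

Lemma card_I4 : #|[set i : 'I_4 | ((i == 1%N :> nat) + (i == 2%N :> nat))%N != 0%N]|.-1 = 1%N.
Proof.
have -> : [set i : 'I_4 | ((i == 1%N :> nat) + (i == 2%N :> nat))%N != 0%N] = [set inord 1; inord 2].
  by apply/setP => i; rewrite !inE -!val_eqE /= !inordK //; case: i => [[|[|[|[|m]]]] Hm].
by rewrite cards2 -val_eqE /= !inordK.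
Qed.

Unset Implicit Arguments.
Theorem lemma7p3 (n : nat) (adj : rel 'I_n) (k b : nat)
  (HG : is_taylor_graph adj k b) (x : 'I_n) (W : 'M[algC]_n) (lam : algC)
  (HW : irreducible_Tmodule adj x W) (Hend : has_endpoint adj x W 1)
  (Hloc : local_eigenvalue adj x W lam)
  (Hlam : lam = tsigma k b \/ lam = ttau k b) :
  (diameter_is adj x W 1 /\ thin adj x W) /\
  (forall w0 : 'rV[algC]_n, w0 != 0 -> (w0 <= W *m Estar adj x 1)%MS ->
     let w1 := w0 *m adjmx adj *m Estar adj x 2 in
     [/\ (col_mx w0 w1 == W)%MS, \rank (col_mx w0 w1) = 2%N,
         w0 *m adjmx adj = lam *: w0 + w1,
         (lam = tsigma k b ->
            w1 *m adjmx adj = (lam - theta1 k b) ^+ 2 *: w0 + lam *: w1)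
       & (lam = ttau k b ->
            w1 *m adjmx adj = (lam - theta2 k b) ^+ 2 *: w0 + lam *: w1)]) /\
  (tsigma k b = (theta1 k b + theta2 k b) / 2 /\
   ttau k b = (theta2 k b + theta3 k b) / 2).
Proof.
have hl1 := lam_not_m1 Hlam (tg_bpos HG).
split; last split; last exact: part3.
  set w0 := nz_row (W *m Estar adj x 1).
  have nz : w0 != 0.
    by rewrite nz_row_eq0 -mxrank_eq0; case: Hend.
  have [eUW _ _ _ [nz1 e0 e1]] := module_part HG HW Hend Hloc hl1 nz (nz_row_sub _).
  have rk : forall i, \rank (W *m Estar adj x i) = ((i == 1%N) + (i == 2%N))%N.
    move=> i; rewrite -(eqmxMr _ (eqmxP eUW)) mul_col_mx e0 e1.
    exact: rank_two.
  split.
    rewrite /diameter_is.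
    have -> : [set i : 'I_4 | \rank (W *m Estar adj x i) != 0%N] = [set i : 'I_4 | ((i == 1%N :> nat) + (i == 2%N :> nat))%N != 0%N].
      by apply/setP => i; rewrite !inE rk.
    exact: card_I4.
  by move=> i; rewrite rk; case: i => [|[|[|i]]].
move=> w0 nz hw w1.
have [eUW rk2 H G _] := module_part HG HW Hend Hloc hl1 nz hw.
split => // El.
  by rewrite G El sig_th1.
by rewrite G El tau_th2.
Qed.
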